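(* Let $C$ be an $(n,k)$ linear code over $H(\mathbb{Z})_{2+e_1}$. If $C$ corrects all errors of Lipschitz weight $2$ or less, then $(5^2)^{n-k}\ge 32n^2-8n+1$.
   Context: $H(\mathbb{Z})=\{a_0+a_1e_1+a_2e_2+a_3e_3:a_i\in\mathbb{Z}\}$ (Lipschitz integers) with quaternion multiplication $e_1^2=e_2^2=e_3^2=-1$, $e_1e_2=-e_2e_1=e_3$, $e_3e_1=-e_1e_3=e_2$, $e_2e_3=-e_3e_2=e_1$; $N(q)=a_0^2+a_1^2+a_2^2+a_3^2$. Right congruence: $q_1\equiv_r q_2 \pmod\pi$ iff $q_1-q_2=\delta\pi$ for some $\delta\in H(\mathbb{Z})$; $H(\mathbb{Z})_\pi=H(\mathbb{Z})/H(\mathbb{Z})\pi$, which has $N(\pi)^2$ elements (here $N(2+e_1)=5$). The Lipschitz weight of a class $\gamma$ is $\min\{|a_0|+|a_1|+|a_2|+|a_3| : a_0+a_1e_1+a_2e_2+a_3e_3\in\gamma\}$; the weight of a vector is the sum of the weights of its components. An $(n,k)$ linear code over $H(\mathbb{Z})_\pi$ is an additive subgroup $C\subseteq H(\mathbb{Z})_\pi^n$ such that $H(\mathbb{Z})_\pi^n/C$ has exactly $(N(\pi)^2)^{n-k}$ cosets. $C$ corrects all errors of weight $t$ or less if all vectors of Lipschitz weight at most $t$ lie in pairwise distinct cosets of $C$. *)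

(* Defs.v *)
From HB Require Import structures.
From mathcomp Require Import all_boot all_order all_algebra.
Set Implicit Arguments. Unset Strict Implicit. Unset Printing Implicit Defensive.
Import Order.TTheory GRing.Theory Num.Theory.

(* Lipschitz integers a0 + a1 e1 + a2 e2 + a3 e3 with a_i in Z. *)
Record quat := Quat { q0 : int; q1 : int; q2 : int; q3 : int }.

Local Open Scope ring_scope.

Definition qzero : quat := Quat 0 0 0 0.
Definition qadd (a b : quat) : quat :=
  Quat (q0 a + q0 b) (q1 a + q1 b) (q2 a + q2 b) (q3 a + q3 b).
Definition qopp (a : quat) : quat := Quat (- q0 a) (- q1 a) (- q2 a) (- q3 a).
Definition qsub (a b : quat) : quat := qadd a (qopp b).
(* Hamilton product: e1^2=e2^2=e3^2=-1, e1e2=e3, e2e3=e1, e3e1=e2. *)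
Definition qmul (a b : quat) : quat :=
  Quat (q0 a * q0 b - q1 a * q1 b - q2 a * q2 b - q3 a * q3 b)
       (q0 a * q1 b + q1 a * q0 b + q2 a * q3 b - q3 a * q2 b)
       (q0 a * q2 b - q1 a * q3 b + q2 a * q0 b + q3 a * q1 b)
       (q0 a * q3 b + q1 a * q2 b - q2 a * q1 b + q3 a * q0 b).

Definition qnorm (a : quat) : nat :=
  (`|q0 a| ^ 2 + `|q1 a| ^ 2 + `|q2 a| ^ 2 + `|q3 a| ^ 2)%N.

Definition norm1 (a : quat) : nat := (`|q0 a| + `|q1 a| + `|q2 a| + `|q3 a|)%N.

Definition pi21 : quat := Quat 2 1 0 0.

(* Right congruence modulo pi: x == y iff x - y = delta * pi. Elements of
   H(Z)_pi are represented by Lipschitz integers up to this congruence. *)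
Definition rcong (pi x y : quat) : Prop := exists d : quat, qsub x y = qmul d pi.

(* Vectors in H(Z)_pi^n, represented componentwise by Lipschitz integers. *)
Definition qvec (n : nat) := 'I_n -> quat.
Definition vzero n : qvec n := fun _ => qzero.
Definition vadd n (u v : qvec n) : qvec n := fun i => qadd (u i) (v i).
Definition vopp n (u : qvec n) : qvec n := fun i => qopp (u i).
Definition vsub n (u v : qvec n) : qvec n := fun i => qsub (u i) (v i).
Definition vcong (pi : quat) n (u v : qvec n) : Prop := forall i, rcong pi (u i) (v i).

(* w is the Lipschitz weight of the class of q in H(Z)_pi:
   the minimum of norm1 over the class. *)
Definition class_weight (pi q : quat) (w : nat) : Prop :=
  (exists r, rcong pi r q /\ norm1 r = w) /\
  (forall r, rcong pi r q -> (w <= norm1 r)%N).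

Definition vec_weight (pi : quat) n (u : qvec n) (w : nat) : Prop :=
  exists ws : 'I_n -> nat, (forall i, class_weight pi (u i) (ws i)) /\
                          w = (\sum_(i < n) ws i)%N.

(* A subset C of H(Z)_pi^n, given by a predicate on representatives that
   respects the congruence (so it is a genuine subset of the quotient). *)
Definition well_defined_subset (pi : quat) n (C : qvec n -> Prop) : Prop :=
  forall u v, vcong pi u v -> (C u <-> C v).

Definition additive_subgroup n (C : qvec n -> Prop) : Prop :=
  [/\ C (@vzero n), (forall u v, C u -> C v -> C (vadd u v))
    & (forall u, C u -> C (vopp u))].

Definition num_cosets n (C : qvec n -> Prop) (N : nat) : Prop :=
  exists r : 'I_N -> qvec n,
    (forall i j, C (vsub (r i) (r j)) -> i = j) /\
    (forall u, exists i, C (vsub u (r i))).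

Definition linear_code (pi : quat) (n k : nat) (C : qvec n -> Prop) : Prop :=
  [/\ (k <= n)%N, well_defined_subset pi C, additive_subgroup C
    & num_cosets C ((qnorm pi ^ 2) ^ (n - k))%N].

Arguments linear_code pi n k C : clear implicits.

Definition corrects (pi : quat) n (C : qvec n -> Prop) (t : nat) : Prop :=
  forall u v wu wv, vec_weight pi u wu -> vec_weight pi v wv ->
    (wu <= t)%N -> (wv <= t)%N -> C (vsub u v) -> vcong pi u v.

(* Main.v *)
Require Import Defs.
From mathcomp Require Import all_boot all_order all_algebra ring zify.
From Stdlib Require Import Classical ClassicalEpsilon.
Import Order.TTheory GRing.Theory Num.Theory.
Local Open Scope ring_scope.

Definition reps : seq quat :=
 [:: Quat 0 0 0 0; Quat 1 0 0 0; Quat (-1) 0 0 0; Quat 0 1 0 0; Quat 0 (-1) 0 0;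
     Quat 0 0 1 0; Quat 0 0 (-1) 0; Quat 0 0 0 1; Quat 0 0 0 (-1);
     Quat (-1) 0 (-1) 0; Quat (-1) 0 0 (-1); Quat (-1) 0 0 1; Quat (-1) 0 1 0;
     Quat 0 (-1) (-1) 0; Quat 0 (-1) 0 (-1); Quat 0 (-1) 0 1; Quat 0 (-1) 1 0;
     Quat 0 1 (-1) 0; Quat 0 1 0 (-1); Quat 0 1 0 1; Quat 0 1 1 0;
     Quat 1 0 (-1) 0; Quat 1 0 0 (-1); Quat 1 0 0 1; Quat 1 0 1 0].
Definition pibar : quat := Quat 2 (-1) 0 0.
Definition cb (x y : quat) : bool :=
  let z := qmul (qsub x y) pibar in
  [&& (5 %| `|q0 z|)%N, (5 %| `|q1 z|)%N, (5 %| `|q2 z|)%N & (5 %| `|q3 z|)%N].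

Lemma reps_check : all (fun i => all (fun j => cb (nth qzero reps i) (nth qzero reps j) ==> (i == j)) (iota 0 25)) (iota 0 25).
Proof. by vm_compute. Qed.
Lemma reps_w2 : all (fun q => norm1 q <= 2)%N reps.
Proof. by vm_compute. Qed.
Lemma reps_w1 : all (fun q => norm1 q <= 1)%N (take 9 reps).
Proof. by vm_compute. Qed.

Lemma rcong_cb x y : rcong pi21 x y -> cb x y.
Proof.
case=> d e; rewrite /cb e.
have -> : qmul (qmul d pi21) pibar = Quat (5 * q0 d) (5 * q1 d) (5 * q2 d) (5 * q3 d).
  by case: d {e} => a b c f; rewrite /qmul /=; congr Quat; ring.
by rewrite /= !abszM !dvdn_mulr.
Qed.

Lemma nat_min (P : nat -> Prop) n : P n -> exists m, P m /\ forall k, P k -> (m <= k)%N.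
Proof.
elim: n {-2}n (leqnn n) => [|N IH] n hn Pn.
  exists n; split=> // k _; move: hn; rewrite leqn0 => /eqP ->; done.
case: (classic (exists k, P k /\ (k < n)%N)) => [[k [Pk kn]]|nk].
  by apply: (IH k) => //; lia.
exists n; split=> // k Pk; case: (leqP n k) => // kn; exfalso; apply: nk; by exists k.
Qed.

Lemma rcong_refl x : rcong pi21 x x.
Proof. exists qzero; case: x => a b c d; rewrite /qsub/qadd/qopp/qmul/=; congr Quat; ring. Qed.

Lemma cw_exists q : exists w, class_weight pi21 q w /\ (w <= norm1 q)%N.
Proof.
have [m [[r [hr <-]] hm]] := @nat_min (fun w => exists r, rcong pi21 r q /\ norm1 r = w) (norm1 q)
   ltac:(by exists q; split=> //; apply: rcong_refl).
exists (norm1 r); split; last by apply: hm; exists q; split=> //; apply: rcong_refl.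
split; first by exists r.
by move=> r' hr'; apply: hm; exists r'.
Qed.

Lemma vw_exists n (u : qvec n) : exists w, vec_weight pi21 u w /\ (w <= \sum_(i < n) norm1 (u i))%N.
Proof.
pose ws i := proj1_sig (constructive_indefinite_description _ (cw_exists (u i))).
have hws i : class_weight pi21 (u i) (ws i) /\ (ws i <= norm1 (u i))%N.
  exact: proj2_sig (constructive_indefinite_description _ (cw_exists (u i))).
exists (\sum_(i < n) ws i)%N; split.
  by exists ws; split=> // i; case: (hws i).
by apply: leq_sum => i _; case: (hws i).
Qed.

Definition Pn n := {p : 'I_n * 'I_n | (p.1 < p.2)%N}.
Definition Xn n := option (('I_n * 'I_24) + (Pn n * 'I_8 * 'I_8)).
Definition cd n (x : Xn n) (i : 'I_n) : nat :=
 match x with None => 0%N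
 | Some (inl (j,a)) => if i == j then a.+1 else 0%N
 | Some (inr (p,a,b)) => if i == (val p).1 then a.+1 else if i == (val p).2 then b.+1 else 0%N end.

Arguments cd {n}.
Lemma cd_inj n (x y : Xn n) : (forall i, cd x i = cd y i) -> x = y.
Proof.
case: x => [[[j a]|[[[[j1 l1] jl1] a] b]]|]; case: y => [[[j' a']|[[[[j2 l2] jl2] c] d]]|] //= H.
- have := H j; rewrite eqxx; case: eqP => [<- [] /val_inj -> //|//].
- have := H j2; rewrite eqxx; case: eqP => // ej _.
  have := H l2; rewrite eqxx; have -> : (l2 == j2) = false by apply/negbTE; rewrite neq_ltn jl2 orbT.
  by rewrite -ej; have -> : (l2 == j2) = false by apply/negbTE; rewrite neq_ltn jl2 orbT.
- by have := H j; rewrite eqxx.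
- have := H j1; rewrite eqxx; case: eqP => // ej _.
  have := H l1; rewrite eqxx; have -> : (l1 == j1) = false by apply/negbTE; rewrite neq_ltn jl1 orbT.
  by rewrite -ej; have -> : (l1 == j1) = false by apply/negbTE; rewrite neq_ltn jl1 orbT.
- have nl1 : (l1 == j1) = false by apply/negbTE; rewrite neq_ltn jl1 orbT.
  have nl2 : (l2 == j2) = false by apply/negbTE; rewrite neq_ltn jl2 orbT.
  have h1 := H j1; have h2 := H l1; have h3 := H j2; have h4 := H l2.
  rewrite eqxx in h1; rewrite eqxx nl1 in h2; rewrite eqxx in h3; rewrite eqxx nl2 in h4.
  move: h1 h2 h3 h4.
  case: (eqVneq j1 j2) => [e1|n1].
    subst j2; rewrite nl1 nl2; case: (eqVneq l1 l2) => [e2|n2]; last by [].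
    subst l2; rewrite ?eqxx => -[/val_inj ea] [/val_inj eb] _ _; subst.
    by congr (Some (inr (_, _, _))); apply: val_inj.
  case: (eqVneq j1 l2) => [e3|]; last by [].
  case: (eqVneq j2 l1) => [e4|]; last by [].
  subst; move: jl1 jl2 => /= *; lia.
- by have := H j1; rewrite eqxx.
- by have := H j'; rewrite eqxx.
- by have := H j2; rewrite eqxx.
Qed.


Lemma tri n : (\sum_(i < n) \sum_(j < n) (if (i < j)%N then 1 else 0) = 'C(n, 2))%N.
Proof.
elim: n => [|n IH]; first by rewrite big_ord0.
rewrite big_ord_recr /=.
under eq_bigr => i _ do rewrite big_ord_recr /=.
rewrite big_split /= IH.
rewrite [X in (_ + X)%N]big1; last by move=> j _; rewrite ltnNge -ltnS ltn_ord.
rewrite (eq_bigr (fun _ => 1%N)); last by move=> i _; rewrite ltn_ord.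
by rewrite sum_nat_const card_ord muln1 addn0 binS bin1.
Qed.

Lemma cardP n : #|{: Pn n}| = 'C(n, 2).
Proof.
rewrite card_sig -sum1_card big_mkcond /=.
rewrite -(pair_bigA _ (fun i j : 'I_n => if (i < j)%N then 1 else 0)%N) /=.
exact: tri.
Qed.

Definition code (c : nat) : quat := nth qzero reps c.

Lemma code_inj a b : (a < 25)%N -> (b < 25)%N -> rcong pi21 (code a) (code b) -> a = b.
Proof.
move=> ha hb /rcong_cb h.
have /allP /(_ a) := reps_check; rewrite mem_iota add0n => /(_ ha) /allP /(_ b).
by rewrite mem_iota add0n => /(_ hb) /implyP /(_ h) /eqP.
Qed.

Lemma code_w2 a : (a < 25)%N -> (norm1 (code a) <= 2)%N.
Proof. by move=> ha; apply: (all_nthP qzero reps_w2). Qed.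

Lemma code_w1 a : (a < 9)%N -> (norm1 (code a) <= 1)%N.
Proof.
move=> ha; have := all_nthP qzero reps_w1 a.
by rewrite nth_take //; apply.
Qed.

Lemma cd_lt n (x : Xn n) i : (cd x i < 25)%N.
Proof.
case: x => [[[j a]|[[p a] b]]|] //=.
  by case: eqP => // _ ; rewrite ltnS ltn_ord.
case: eqP => _; first by have := ltn_ord a; lia.
by case: eqP => _ //; have := ltn_ord b; lia.
Qed.

Definition vec n (x : Xn n) : qvec n := fun i => code (cd x i).
Arguments vec {n}.

Lemma vec_wt n (x : Xn n) : (\sum_(i < n) norm1 (vec x i) <= 2)%N.
Proof.
rewrite /vec; case: x => [[[j a]|[[[[j l] jl] a] b]]|] /=.
- rewrite (bigD1 j) //= eqxx big1 ?addn0; first by apply: code_w2; rewrite ltnS ltn_ord.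
  by move=> i /negbTE ->.
- have nl : (l == j) = false by apply/negbTE; rewrite neq_ltn jl orbT.
  rewrite (bigD1 j) //= eqxx (bigD1 l) /=; last by rewrite nl.
  rewrite nl eqxx big1 ?addn0.
    rewrite -[2%N]/(1 + 1)%N; apply: leq_add; apply: code_w1; rewrite ltnS ltn_ord //.
  by move=> i /andP [/negbTE -> /negbTE ->].
- by rewrite big1.
Qed.

Theorem theorem8 (n k : nat) (C : qvec n -> Prop) :
  linear_code pi21 n k C -> corrects pi21 C 2 ->
  (32 * n ^ 2 - 8 * n + 1 <= (5 ^ 2) ^ (n - k))%N.
Proof.
move=> [kn wd [C0 Cadd Copp] [r [rinj rsurj]]] Hc.
pose f (x : Xn n) := proj1_sig (constructive_indefinite_description _ (rsurj (vec x))).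
have hf x : C (vsub (vec x) (r (f x))).
  exact: proj2_sig (constructive_indefinite_description _ (rsurj (vec x))).
have finj : injective f.
  move=> x y efxy.
  have hx := hf x; have hy := hf y; rewrite -efxy in hy.
  have Cxy : C (vsub (vec x) (vec y)).
    apply: (proj1 (wd (vadd (vsub (vec x) (r (f x))) (vopp (vsub (vec y) (r (f x))))) _ _)).
      move=> i; exists qzero; rewrite /vadd /vsub /vopp.
      move: (vec x i) (vec y i) (r (f x) i) => [? ? ? ?] [? ? ? ?] [? ? ? ?].
      rewrite /qsub /qadd /qopp /qmul /=; congr Quat; ring.
    by apply: Cadd => //; apply: Copp.
  have [wx [hwx wxle]] := @vw_exists _ (vec x).
  have [wy [hwy wyle]] := @vw_exists _ (vec y).
  have hv := Hc _ _ _ _ hwx hwy (leq_trans wxle (@vec_wt _ x)) (leq_trans wyle (@vec_wt _ y)) Cxy.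
  by apply: cd_inj => i; apply: code_inj; [apply: cd_lt | apply: cd_lt | apply: hv].
have := leq_card f finj.
rewrite card_ord card_option card_sum !card_prod !card_ord cardP.
have -> : qnorm pi21 = 5%N by [].
have hb := mul_bin_diag n 1; rewrite bin1 in hb.
move: ((5 ^ 2) ^ (n - k))%N => M.
move: ('C(n, 2)) hb => c; clear -n; case: n => [|m] /= hb; lia.
Qed.
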